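(* Let $R>r>0$ with $1<R/r<\sqrt{2}$. Then the standard torus $T_{R,r}$ is conformally equivalent to the standard torus $T_{R,\sqrt{R^2-r^2}}$. Moreover, the map $T_{R,r}\mapsto T_{R,\sqrt{R^2-r^2}}$ is a bijection between the set of standard tori $T_{R,r}$ with $1<R/r<\sqrt{2}$ and the set of standard tori $T_{R,r}$ with $\sqrt{2}<R/r$.
   Context: For $R>r>0$, the standard torus $T_{R,r}\subset\mathbb{R}^3$ is the image of $\Phi(\theta,\varphi)=\big((R+r\cos\varphi)\cos\theta,(R+r\cos\varphi)\sin\theta,r\sin\varphi\big)$, $(\theta,\varphi)\in\mathbb{R}^2$, equipped with the complex structure (conformal class) induced by the Euclidean metric of $\mathbb{R}^3$. Standard tori are indexed by the pairs $(R,r)$ with $R>r>0$. *)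

(* Defs.v *)
From Stdlib Require Import Reals.
From Coquelicot Require Import Coquelicot.
Open Scope R_scope.

Definition R3 := (R * R * R)%type.
Definition c1 (v : R3) : R := fst (fst v).
Definition c2 (v : R3) : R := snd (fst v).
Definition c3 (v : R3) : R := snd v.
Definition dot3 (u v : R3) : R := c1 u * c1 v + c2 u * c2 v + c3 u * c3 v.

(* Parametrization Phi_{a,r}(theta,phi) of the standard torus T_{a,r}
   (a = big radius R, r = small radius). *)
Definition Phi (a r : R) (th ph : R) : R3 :=
  (((a + r * cos ph) * cos th, (a + r * cos ph) * sin th), r * sin ph).

Definition torus (a r : R) (x : R3) : Prop := exists th ph, x = Phi a r th ph.

Definition partials (X : R -> R -> R3) (th ph : R) (Xt Xp : R3) : Prop :=
  is_derive (fun t => c1 (X t ph)) th (c1 Xt) /\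
  is_derive (fun t => c2 (X t ph)) th (c2 Xt) /\
  is_derive (fun t => c3 (X t ph)) th (c3 Xt) /\
  is_derive (fun s => c1 (X th s)) ph (c1 Xp) /\
  is_derive (fun s => c2 (X th s)) ph (c2 Xp) /\
  is_derive (fun s => c3 (X th s)) ph (c3 Xp).

Definition C1_with (f fx fy : R -> R -> R) : Prop :=
  forall x y,
    is_derive (fun t => f t y) x (fx x y) /\
    is_derive (fun t => f x t) y (fy x y) /\
    continuous (fun p : R * R => fx (fst p) (snd p)) (x, y) /\
    continuous (fun p : R * R => fy (fst p) (snd p)) (x, y).

Definition conformal_at (X Y : R -> R -> R3) (th ph : R) : Prop :=
  exists lam Xt Xp Yt Yp, 0 < lam /\
    partials X th ph Xt Xp /\ partials Y th ph Yt Yp /\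
    dot3 Yt Yt = lam * dot3 Xt Xt /\
    dot3 Yt Yp = lam * dot3 Xt Xp /\
    dot3 Yp Yp = lam * dot3 Xp Xp.

(* Conformal equivalence of standard tori T_{a,r} and T_{a',r'}: there is a
   bijection g : T_{a,r} -> T_{a',r'} which, read in the (theta,phi)
   parametrizations, is given by a C^1 map G = (G1,G2) of R^2 with positive
   Jacobian (orientation preserving, i.e. holomorphic rather than
   antiholomorphic) and which is conformal for the metrics induced by R^3. *)
Definition conf_equiv (a r a' r' : R) : Prop :=
  exists (g : R3 -> R3) (G1 G2 G1x G1y G2x G2y : R -> R -> R),
    C1_with G1 G1x G1y /\ C1_with G2 G2x G2y /\
    (forall th ph, g (Phi a r th ph) = Phi a' r' (G1 th ph) (G2 th ph)) /\
    (forall x y, torus a r x -> torus a r y -> g x = g y -> x = y) /\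
    (forall y, torus a' r' y -> exists x, torus a r x /\ g x = y) /\
    (forall th ph, 0 < G1x th ph * G2y th ph - G1y th ph * G2x th ph) /\
    (forall th ph, conformal_at (Phi a r)
                     (fun t s => Phi a' r' (G1 t s) (G2 t s)) th ph).

Definition std_small (p : R * R) : Prop :=
  0 < snd p < fst p /\ 1 < fst p / snd p < sqrt 2.
Definition std_large (p : R * R) : Prop :=
  0 < snd p < fst p /\ sqrt 2 < fst p / snd p.
Definition dual_torus (p : R * R) : R * R :=
  (fst p, sqrt (fst p ^ 2 - snd p ^ 2)).

(* Main.v *)
From Stdlib Require Import Reals Lra Nsatz ClassicalEpsilon.
Require Import Defs.
From Coquelicot Require Import Coquelicot.
Open Scope R_scope.

Definition DD (c x : R) := 1 + 2 * c * cos x + c ^ 2.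
Definition P (c x : R) := x - 2 * atan (c * sin x / (1 + c * cos x)).
Definition dP (c x : R) := (1 - c ^ 2) / DD c x.

Lemma DD_pos c x : -1 < c < 1 -> 0 < DD c x.
Proof. intros. unfold DD. pose proof (COS_bound x). 
  destruct (Rle_dec 0 c); nra. Qed.

Lemma den_pos c x : -1 < c < 1 -> 0 < 1 + c * cos x.
Proof. intros. pose proof (COS_bound x). destruct (Rle_dec 0 c); nra. Qed.

Lemma sin2 x : sin x ^ 2 = 1 - cos x ^ 2.
Proof. pose proof (sin2_cos2 x). unfold Rsqr in *. nra. Qed.

Lemma P_derive c x : -1 < c < 1 -> is_derive (P c) x (dP c x).
Proof. intros Hc. pose proof (den_pos c x Hc) as H1. pose proof (DD_pos c x Hc) as H2.
  unfold P, dP. auto_derive. lra.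
  unfold DD in *. 
  assert (E: (1 + c * cos x) * (1 + c * cos x) + c * sin x * (c * sin x) = DD c x).
  { unfold DD. replace (c * sin x * (c * sin x)) with (c^2 * sin x ^2) by ring. rewrite sin2. ring. }
  unfold DD in E.
  field_simplify; [| lra | split;[lra| rewrite E; lra]]. rewrite sin2. field. lra.
Qed.

Lemma cos2atan t : cos (2 * atan t) = (1 - t^2) / (1 + t^2).
Proof. rewrite cos_2a, cos_atan, sin_atan.
  assert (0 < 1 + t²) by (unfold Rsqr; nra).
  pose proof (sqrt_sqrt (1 + t²) ltac:(lra)). pose proof (sqrt_lt_R0 _ H).
  assert (H3: sqrt (1 + t²) ^ 2 = 1 + t²) by (simpl; rewrite Rmult_1_r; auto).
  unfold Rsqr in *. field_simplify; try lra. rewrite H3. field. nra. Qed.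

Lemma sin2atan t : sin (2 * atan t) = 2 * t / (1 + t^2).
Proof. rewrite sin_2a, cos_atan, sin_atan.
  assert (0 < 1 + t²) by (unfold Rsqr; nra).
  pose proof (sqrt_sqrt (1 + t²) ltac:(lra)). pose proof (sqrt_lt_R0 _ H).
  assert (H3: sqrt (1 + t²) ^ 2 = 1 + t²) by (simpl; rewrite Rmult_1_r; auto).
  unfold Rsqr in *. field_simplify; try lra. rewrite H3. field. nra. Qed.

Lemma cosP c x : -1 < c < 1 -> cos (P c x) = ((1 + c^2) * cos x + 2 * c) / DD c x.
Proof. intros Hc. pose proof (den_pos c x Hc) as H1. pose proof (DD_pos c x Hc) as H2.
  unfold P. rewrite cos_minus, cos2atan, sin2atan. unfold DD in *.
  assert (E: 1 + (c * sin x / (1 + c * cos x))^2 = DD c x / (1 + c * cos x)^2).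
  { unfold DD. field_simplify; try lra. rewrite sin2. field. nra. }
  unfold DD in E. rewrite E. field_simplify; try lra. 
  rewrite sin2. field. lra.
Qed.

Lemma sinP c x : -1 < c < 1 -> sin (P c x) = (1 - c^2) * sin x / DD c x.
Proof. intros Hc. pose proof (den_pos c x Hc) as H1. pose proof (DD_pos c x Hc) as H2.
  unfold P. rewrite sin_minus, cos2atan, sin2atan. unfold DD in *.
  assert (E: 1 + (c * sin x / (1 + c * cos x))^2 = DD c x / (1 + c * cos x)^2).
  { unfold DD. field_simplify; try lra. rewrite sin2. field. nra. }
  unfold DD in E. rewrite E. field_simplify; try lra. 
  replace (sin x ^ 3) with (sin x * sin x ^ 2) by ring. rewrite sin2. field. lra.
Qed.

Lemma K1 a r r' u : 0 < r -> r' ^ 2 = a ^ 2 - r ^ 2 ->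
  (1 - ((a - r') / r) ^ 2) * (a + r * u) = r' * (1 + 2 * ((a - r') / r) * u + ((a - r') / r) ^ 2).
Proof. intros Hr H. field_simplify_eq; [|lra]. replace (r' ^ 3) with (r' * r' ^ 2) by ring. rewrite H. ring. Qed.

Lemma K2 a r r' u : 0 < r' -> r' ^ 2 = a ^ 2 - r ^ 2 ->
  let e := - ((a - r) / r') in
  a * (1 + 2 * e * u + e ^ 2) + r' * ((1 + e ^ 2) * u + 2 * e) = r * (1 - e ^ 2).
Proof. intros Hr H e. unfold e. field_simplify_eq; [|lra]. replace (r' ^ 3) with (r' * r' ^ 2) by ring. rewrite H. ring. Qed.

Lemma P_trig_eq c y1 y2 : -1 < c < 1 -> cos y1 = cos y2 -> sin y1 = sin y2 ->
  cos (P c y1) = cos (P c y2) /\ sin (P c y1) = sin (P c y2).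
Proof. intros Hc H1 H2. rewrite !cosP, !sinP by auto. unfold DD. rewrite H1, H2. auto. Qed.

Lemma P_inv c x : -1 < c < 1 -> cos (P (-c) (P c x)) = cos x /\ sin (P (-c) (P c x)) = sin x.
Proof. intros Hc. assert (Hc' : -1 < -c < 1) by lra.
  pose proof (DD_pos c x Hc) as H2.
  assert (E : DD (-c) (P c x) = (1 - c^2)^2 / DD c x).
  { unfold DD at 1. rewrite cosP by auto. unfold DD in *. field. lra. }
  rewrite cosP, sinP, E, cosP, sinP by auto. split.
  - unfold DD in *. field. split; [lra|]. assert (0 < 1 - c^2) by nra. lra.
  - unfold DD in *. field. split; [lra|]. assert (0 < 1 - c^2) by nra. lra.
Qed.

Lemma P_inv' c x : -1 < c < 1 -> cos (P c (P (-c) x)) = cos x /\ sin (P c (P (-c) x)) = sin x.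
Proof. intros Hc. pose proof (P_inv (-c) x ltac:(lra)). rewrite Ropp_involutive in H. auto. Qed.

Lemma P_trig_inj c y1 y2 : -1 < c < 1 -> cos (P c y1) = cos (P c y2) -> sin (P c y1) = sin (P c y2) ->
  cos y1 = cos y2 /\ sin y1 = sin y2.
Proof. intros Hc H1 H2. destruct (P_inv c y1 Hc) as [A1 B1]. destruct (P_inv c y2 Hc) as [A2 B2].
  destruct (P_trig_eq (-c) _ _ ltac:(lra) H1 H2) as [E1 E2]. rewrite <- A1, <- A2, <- B1, <- B2; auto. Qed.

Lemma Phi_trig a r t1 p1 t2 p2 : 0 < r < a ->
  Phi a r t1 p1 = Phi a r t2 p2 ->
  cos t1 = cos t2 /\ sin t1 = sin t2 /\ cos p1 = cos p2 /\ sin p1 = sin p2.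
Proof. intros Hr H. unfold Phi in H. injection H as E1 E2 E3.
  pose proof (COS_bound p1). pose proof (COS_bound p2).
  assert (A1 : 0 < a + r * cos p1) by nra. assert (A2 : 0 < a + r * cos p2) by nra.
  assert (S3 : sin p1 = sin p2) by (apply Rmult_eq_reg_l with r; lra).
  assert (Q : (a + r * cos p1)^2 = (a + r * cos p2)^2).
  { pose proof (sin2_cos2 t1). pose proof (sin2_cos2 t2). unfold Rsqr in *.
    transitivity (((a + r * cos p1) * cos t1)^2 + ((a + r * cos p1) * sin t1)^2).
    - replace (((a + r * cos p1) * cos t1)^2 + ((a + r * cos p1) * sin t1)^2) with
        ((a + r * cos p1)^2 * (sin t1 * sin t1 + cos t1 * cos t1)) by ring. rewrite H1. ring.
    - rewrite E1, E2. replace (((a + r * cos p2) * cos t2)^2 + ((a + r * cos p2) * sin t2)^2) with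
        ((a + r * cos p2)^2 * (sin t2 * sin t2 + cos t2 * cos t2)) by ring. rewrite H2. ring. }
  assert (Q2 : a + r * cos p1 = a + r * cos p2) by nra.
  assert (C3 : cos p1 = cos p2) by (apply Rmult_eq_reg_l with r; lra).
  rewrite Q2 in E1, E2.
  split; [apply Rmult_eq_reg_l with (a + r * cos p2); lra|].
  split; [apply Rmult_eq_reg_l with (a + r * cos p2); lra|]. auto.
Qed.

Lemma Phi_of_trig a r t1 p1 t2 p2 :
  cos t1 = cos t2 -> sin t1 = sin t2 -> cos p1 = cos p2 -> sin p1 = sin p2 ->
  Phi a r t1 p1 = Phi a r t2 p2.
Proof. intros. unfold Phi. rewrite H, H0, H1, H2. auto. Qed.

Lemma dP_pos c x : -1 < c < 1 -> 0 < dP c x.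
Proof. intros. unfold dP. pose proof (DD_pos c x H). apply Rdiv_lt_0_compat; nra. Qed.

Lemma dP_cont c x : -1 < c < 1 -> continuous (dP c) x.
Proof. intros. apply (ex_derive_continuous (dP c)). pose proof (DD_pos c x H). unfold dP, DD in *.
  auto_derive. lra. Qed.

Lemma partials_Phi a r th ph : partials (Phi a r) th ph
  ((- ((a + r * cos ph) * sin th), (a + r * cos ph) * cos th), 0)
  ((- (r * sin ph * cos th), - (r * sin ph * sin th)), r * cos ph).
Proof. unfold partials, Phi, c1, c2, c3; simpl.
  repeat match goal with |- _ /\ _ => split end; auto_derive; auto; ring. Qed.

Lemma partials_Y a r' (F G : R -> R) dF dG th ph :
  is_derive F th dF -> is_derive G ph dG ->
  partials (fun t s => Phi a r' (G s) (F t)) th ph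
  ((- (r' * sin (F th) * dF * cos (G ph)), - (r' * sin (F th) * dF * sin (G ph))), r' * cos (F th) * dF)
  ((- ((a + r' * cos (F th)) * sin (G ph) * dG), (a + r' * cos (F th)) * cos (G ph) * dG), 0).
Proof. intros HF HG. pose proof (is_derive_unique _ _ _ HF) as UF. pose proof (is_derive_unique _ _ _ HG) as UG.
  assert (EF : ex_derive F th) by (eexists; eauto). assert (EG : ex_derive G ph) by (eexists; eauto).
  unfold partials, Phi, c1, c2, c3; simpl.
  repeat match goal with |- _ /\ _ => split end; auto_derive; auto; rewrite ?(UF : Derive (fun x => F x) th = dF), ?(UG : Derive (fun x => G x) ph = dG); ring. Qed.

Lemma frac01 x y : 0 < x < y -> 0 < x / y < 1.
Proof. intros. split. apply Rdiv_lt_0_compat; lra.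
  apply (Rmult_lt_reg_r y); [lra|]. unfold Rdiv. rewrite Rmult_assoc, Rinv_l; lra. Qed.

Lemma PE_derive e th : -1 < e < 1 -> is_derive (fun t => P e (- t)) th (- dP e (- th)).
Proof. intros He. pose proof (P_derive e (-th) He) as H. pose proof (is_derive_unique _ _ _ H) as U.
  auto_derive. eexists; eauto. rewrite (U : Derive (fun x => P e x) (-th) = dP e (-th)). ring. Qed.

Lemma dPE_cont e x : -1 < e < 1 -> continuous (fun t => - dP e (- t)) x.
Proof. intros. apply (ex_derive_continuous (fun t => - dP e (- t))). pose proof (DD_pos e (-x) H). unfold dP, DD in *.
  auto_derive. lra. Qed.

Lemma dconst (k x : R) : is_derive (fun _ => k) x 0.
Proof. exact (is_derive_const k x). Qed.

Ltac dots := unfold dot3, c1, c2, c3; simpl; ring_simplify; rewrite ?sin2; ring.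

Lemma conf_main a r : 0 < r < a -> conf_equiv a r a (sqrt (a^2 - r^2)).
Proof.
 intros [Hr Hra].
 set (r' := sqrt (a^2 - r^2)).
 assert (Hr'2 : r'^2 = a^2 - r^2) by (apply pow2_sqrt; nra).
 assert (Hr' : 0 < r') by (apply sqrt_lt_R0; nra).
 assert (Hr'a: r' < a) by nra.
 assert (Hsum: a < r + r') by nra.
 set (c := (a - r')/r). set (e := -((a - r)/r')).
 assert (Hc : -1 < c < 1) by (pose proof (frac01 (a - r') r ltac:(lra)); unfold c; lra).
 assert (He : -1 < e < 1) by (pose proof (frac01 (a - r) r' ltac:(lra)); unfold e; lra).
 set (g := fun x : R3 => let p := epsilon (inhabits (0,0)) (fun p : R*R => x = Phi a r (fst p) (snd p)) in
                         Phi a r' (P c (snd p)) (P e (- fst p))).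
 assert (gPhi : forall th ph, g (Phi a r th ph) = Phi a r' (P c ph) (P e (-th))).
 { intros th ph. unfold g.
   set (p := epsilon _ _).
   assert (Hp : Phi a r th ph = Phi a r (fst p) (snd p)).
   { apply (epsilon_spec (inhabits (0,0)) (fun p : R*R => Phi a r th ph = Phi a r (fst p) (snd p))).
     exists (th,ph); auto. }
   apply Phi_trig in Hp; [|lra]. destruct Hp as (A1&A2&A3&A4).
   destruct (P_trig_eq c (snd p) ph Hc (eq_sym A3) (eq_sym A4)) as [B1 B2].
   destruct (P_trig_eq e (- fst p) (- th) He) as [B3 B4].
   rewrite !cos_neg; auto. rewrite !sin_neg; auto. rewrite A2; auto.
   apply Phi_of_trig; auto. }
 exists g, (fun _ ph => P c ph), (fun th _ => P e (-th)), (fun _ _ => 0), (fun _ ph => dP c ph),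
   (fun th _ => - dP e (-th)), (fun _ _ => 0).
 split.
 { intros x y. split; [apply dconst|]. split; [apply P_derive; auto|].
   split; [apply continuous_const|].
   apply (continuous_comp snd (dP c)). apply continuous_snd. apply dP_cont; auto. }
 split.
 { intros x y. split; [apply PE_derive; auto|]. split; [apply dconst|].
   split; [|apply continuous_const].
   apply (continuous_comp fst (fun t => - dP e (- t))). apply continuous_fst. apply dPE_cont; auto. }
 split; [exact gPhi|].
 split.
 { intros x y [t1 [p1 ->]] [t2 [p2 ->]]. rewrite !gPhi. intros H.
   apply Phi_trig in H; [|lra]. destruct H as (A1&A2&A3&A4).
   destruct (P_trig_inj c p1 p2 Hc A1 A2). destruct (P_trig_inj e _ _ He A3 A4).
   rewrite !cos_neg, !sin_neg in *. apply Phi_of_trig; auto; lra. }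
 split.
 { intros y [t' [p' ->]]. exists (Phi a r (- P (-e) p') (P (-c) t')). split.
   - eexists; eexists; eauto.
   - rewrite gPhi, Ropp_involutive. destruct (P_inv' c t' Hc). destruct (P_inv' e p' He).
     apply Phi_of_trig; auto. }
 split.
 { intros th ph. pose proof (dP_pos c ph Hc). pose proof (dP_pos e (-th) He). nra. }
 intros th ph. unfold conformal_at.
 pose proof (partials_Y a r' (fun t => P e (-t)) (P c) (- dP e (-th)) (dP c ph) th ph
    (PE_derive e th He) (P_derive c ph Hc)) as PY.
 pose proof (partials_Phi a r th ph) as PX.
 pose proof (COS_bound ph).
 assert (HA : 0 < a + r * cos ph) by nra.
 assert (K1' : dP c ph * (a + r * cos ph) = r').
 { pose proof (DD_pos c ph Hc). unfold dP. pose proof (K1 a r r' (cos ph) Hr Hr'2).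
   fold c in H1. replace ((1 - c^2) / DD c ph * (a + r * cos ph)) with ((1 - c^2) * (a + r * cos ph) / DD c ph) by (field; lra).
   rewrite H1. unfold DD. field. unfold DD in H0. lra. }
 assert (K2' : a + r' * cos (P e (- th)) = r * dP e (- th)).
 { pose proof (DD_pos e (-th) He). rewrite cosP by auto. unfold dP.
   pose proof (K2 a r r' (cos (-th)) Hr' Hr'2) as H1. cbv zeta in H1. fold e in H1.
   transitivity ((a * DD e (-th) + r' * ((1+e^2)*cos(-th) + 2*e)) / DD e (-th)); [field; lra|].
   unfold DD at 1. rewrite H1. field. lra. }
 eexists (r'^2 * dP e (-th)^2 / (a + r * cos ph)^2), _, _, _, _.
 split; [|split; [exact PX|split; [exact PY|]]].
 { pose proof (dP_pos e (-th) He). apply Rdiv_lt_0_compat; [apply Rmult_lt_0_compat; apply pow_lt; lra | apply pow_lt; lra]. }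
 split; [|split].
 - transitivity (r'^2 * dP e (-th)^2); [dots|].
   transitivity (r'^2 * dP e (-th)^2 / (a + r * cos ph)^2 * (a + r * cos ph)^2); [field; lra|].
   f_equal. dots.
 - transitivity 0; [dots|]. transitivity (r'^2 * dP e (-th)^2 / (a + r * cos ph)^2 * 0); [ring|].
   f_equal. dots.
 - transitivity ((a + r' * cos (P e (- th)))^2 * dP c ph ^2); [dots|].
   transitivity (r'^2 * dP e (-th)^2 / (a + r * cos ph)^2 * r^2).
   2:{ f_equal. dots. }
   rewrite K2'. replace (dP c ph) with (r' / (a + r * cos ph)) by (rewrite <- K1'; field; lra).
   field. lra.
Qed.

Lemma L1 x y : 0 < x -> 0 < y -> (y / x < sqrt 2 <-> y^2 < 2 * x^2).
Proof. intros Hx Hy. assert (Hs : sqrt 2 ^ 2 = 2) by (apply pow2_sqrt; lra).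
  assert (Hs0 : 0 < sqrt 2) by (apply sqrt_lt_R0; lra).
  assert (Hq : y / x * x = y) by (field; lra). assert (Hq0 : 0 < y / x) by (apply Rdiv_lt_0_compat; lra).
  set (q := y / x) in *. rewrite <- Hq. split; intro H.
  - assert (q * q < sqrt 2 * sqrt 2) by (apply Rmult_le_0_lt_compat; lra).
    replace ((q*x)^2) with (q^2*x^2) by ring. apply Rmult_lt_compat_r; [apply pow_lt; lra|]. simpl in *. lra.
  - replace ((q*x)^2) with (q^2*x^2) in H by ring.
    assert (q^2 < 2). { destruct (Rlt_or_le (q^2) 2); auto. assert (0 < x^2) by (apply pow_lt; lra).
      assert (2 * x^2 <= q^2 * x^2) by (apply Rmult_le_compat_r; lra). lra. }
    destruct (Rlt_or_le q (sqrt 2)); auto. assert (sqrt 2 * sqrt 2 <= q * q) by (apply Rmult_le_compat; lra).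
    simpl in *. lra.
Qed.

Lemma L2 x y : 0 < x -> 0 < y -> (sqrt 2 < y / x <-> 2 * x^2 < y^2).
Proof. intros Hx Hy. assert (Hs : sqrt 2 ^ 2 = 2) by (apply pow2_sqrt; lra).
  assert (Hs0 : 0 < sqrt 2) by (apply sqrt_lt_R0; lra).
  assert (Hq : y / x * x = y) by (field; lra). assert (Hq0 : 0 < y / x) by (apply Rdiv_lt_0_compat; lra).
  set (q := y / x) in *. rewrite <- Hq. split; intro H.
  - assert (sqrt 2 * sqrt 2 < q * q) by (apply Rmult_le_0_lt_compat; lra).
    replace ((q*x)^2) with (q^2*x^2) by ring. apply Rmult_lt_compat_r; [apply pow_lt; lra|]. simpl in *. lra.
  - replace ((q*x)^2) with (q^2*x^2) in H by ring.
    assert (2 < q^2). { destruct (Rlt_or_le 2 (q^2)); auto. assert (0 < x^2) by (apply pow_lt; lra).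
      assert (q^2 * x^2 <= 2 * x^2) by (apply Rmult_le_compat_r; lra). lra. }
    destruct (Rlt_or_le (sqrt 2) q); auto. assert (q * q <= sqrt 2 * sqrt 2) by (apply Rmult_le_compat; lra).
    simpl in *. lra.
Qed.

Lemma L3 x y : 0 < x < y -> 1 < y / x.
Proof. intros. assert (Hq : y / x * x = y) by (field; lra). nra. Qed.

Theorem proposition2 :
  (forall a r : R, 0 < r -> r < a -> 1 < a / r < sqrt 2 ->
     conf_equiv a r a (sqrt (a ^ 2 - r ^ 2))) /\
  (forall p, std_small p -> std_large (dual_torus p)) /\
  (forall p q, std_small p -> std_small q -> dual_torus p = dual_torus q -> p = q) /\
  (forall q, std_large q -> exists p, std_small p /\ dual_torus p = q).
Proof.
  split; [intros; apply conf_main; lra|].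
  split.
  { intros [a r] [[H0 H1] [H2 H3]]. unfold std_large, dual_torus; cbn [fst snd] in *.
    assert (E : sqrt (a^2 - r^2) ^ 2 = a^2 - r^2) by (apply pow2_sqrt; nra).
    assert (P0 : 0 < sqrt (a^2 - r^2)) by (apply sqrt_lt_R0; nra).
    apply L1 in H3; [|lra|lra].
    split; [split; [lra| nra]|]. apply L2; [lra|lra|]. nra. }
  split.
  { intros [a1 r1] [a2 r2] [[H0 H1] _] [[H2 H3] _]. unfold dual_torus; cbn [fst snd] in *. intros H.
    pose proof (f_equal snd H) as Hs. pose proof (f_equal fst H) as Ha. cbn [fst snd] in Hs, Ha. subst a1. clear H. rename Hs into H.
    assert (E1 : sqrt (a2^2 - r1^2) ^ 2 = a2^2 - r1^2) by (apply pow2_sqrt; nra).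
    assert (E2 : sqrt (a2^2 - r2^2) ^ 2 = a2^2 - r2^2) by (apply pow2_sqrt; nra).
    rewrite H in E1. assert (r1 = r2) by nra. subst; auto. }
  { intros [a s] [[H0 H1] H2]. cbn [fst snd] in *.
    assert (E : sqrt (a^2 - s^2) ^ 2 = a^2 - s^2) by (apply pow2_sqrt; nra).
    assert (P0 : 0 < sqrt (a^2 - s^2)) by (apply sqrt_lt_R0; nra).
    apply L2 in H2; [|lra|lra].
    exists (a, sqrt (a^2 - s^2)). unfold std_small, dual_torus; cbn [fst snd]. split.
    - assert (sqrt (a^2 - s^2) < a) by nra.
      split; [lra|]. split; [apply L3; lra|]. apply L1; [lra|lra|]. nra.
    - rewrite E. replace (a^2 - (a^2 - s^2)) with (s^2) by ring. rewrite sqrt_pow2; auto; lra. }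
Qed.
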